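(* Let $D$ be an $n\times n$ positive definite density matrix. Assume that $f,g$ are standard functions such that $$g(x)\ge c\,\frac{(x-1)^2}{f(x)}\qquad\text{for all }x>0$$ for some constant $c>0$. Then for all $n\times n$ self-adjoint matrices $A_1,\dots,A_m$, $$\mathrm{Det}\Big(\big[\mathrm{qCov}^g_D(A_i,A_j)\big]_{i,j=1}^m\Big)\ \ge\ \mathrm{Det}\Big(\big[c\,\gamma^f_D([D,A_i],[D,A_j])\big]_{i,j=1}^m\Big).$$ Moreover, equality holds if and only if the matrices $A_i-(\mathrm{Tr}\,DA_i)I$, $1\le i\le m$, are linearly dependent, and in that case both sides are zero.
   Context: A function $f:(0,\infty)\to(0,\infty)$ is called standard if it is operator monotone, $f(1)=1$ and $f(t)=tf(t^{-1})$ for all $t>0$. For a standard $f$ define the mean $M_f(a,b):=bf(a/b)$ for $a,b>0$. For a positive definite density matrix $D$ (i.e. $D>0$, $\mathrm{Tr}\,D=1$), let $\mathbf L_D(X)=DX$, $\mathbf R_D(X)=XD$ on $n\times n$ complex matrices and $\mathbb J^f_D:=f(\mathbf L_D\mathbf R_D^{-1})\mathbf R_D$. The quantum Fisher information is $\gamma^f_D(A,B):=\mathrm{Tr}\,A^*(\mathbb J^f_D)^{-1}(B)$ and the quantum covariance is $\mathrm{qCov}^f_D(A,B):=\mathrm{Tr}\,A^*\mathbb J^f_D(B)-(\mathrm{Tr}\,DA^* )(\mathrm{Tr}\,DB)$. Equivalently, if $D=\mathrm{Diag}(\lambda_1,\dots,\lambda_n)$ with $\lambda_i>0$, then $\gamma^f_D(A,B)=\sum_{i,j}\frac{1}{M_f(\lambda_i,\lambda_j)}\overline{A_{ij}}B_{ij}$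 and $\mathrm{qCov}^f_D(A,B)=\sum_{i,j}M_f(\lambda_i,\lambda_j)\overline{A_{ij}}B_{ij}-\big(\sum_i\lambda_i\overline{A_{ii}}\big)\big(\sum_i\lambda_iB_{ii}\big)$. $[D,A]=DA-AD$, and $I$ is the identity matrix. *)

(* Defs.v *)
From HB Require Import structures.
From mathcomp Require Import all_boot all_order all_algebra.
From mathcomp Require Import reals.
From mathcomp Require Import complex.
Set Implicit Arguments. Unset Strict Implicit. Unset Printing Implicit Defensive.
Import Order.TTheory GRing.Theory Num.Theory.
Local Open Scope ring_scope.

Section Defs.
Variable R : realType.
Local Notation C := (R[i]).

Definition toC (x : R) : C := Complex x 0.

Definition mxstar (p q : nat) (A : 'M[C]_(p, q)) : 'M[C]_(q, p) :=
  (map_mx Num.conj A)^T.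

Definition selfadjoint (n : nat) (A : 'M[C]_n) : Prop := mxstar A = A.

Definition unitary (n : nat) (U : 'M[C]_n) : Prop := mxstar U *m U = 1%:M.

Definition loewner_le (n : nat) (A B : 'M[C]_n) : Prop :=
  forall x : 'cV[C]_n, 0 <= (mxstar x *m (B - A) *m x) 0 0.

Definition udiag (n : nat) (U : 'M[C]_n) (a : 'I_n -> R) : 'M[C]_n :=
  U *m diag_mx (\row_i toC (a i)) *m mxstar U.

(* f is operator monotone on (0,oo): for all positive definite A <= B of any
   size, f(A) <= f(B), where f(A) is defined through a spectral decomposition
   A = U Diag(a) U^*, f(A) = U Diag(f a) U^*. *)
Definition operator_monotone (f : R -> R) : Prop :=
  forall (n : nat) (U V : 'M[C]_n) (a b : 'I_n -> R),
    unitary U -> unitary V -> (forall i, 0 < a i) -> (forall i, 0 < b i) ->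
    loewner_le (udiag U a) (udiag V b) ->
    loewner_le (udiag U (fun i => f (a i))) (udiag V (fun i => f (b i))).

Definition standard (f : R -> R) : Prop :=
  [/\ (forall t, 0 < t -> 0 < f t),
      operator_monotone f,
      f 1 = 1 &
      forall t, 0 < t -> f t = t * f t^-1].

Definition mean (f : R -> R) (a b : R) : R := b * f (a / b).

(* For D = U Diag(lam) U^* (U unitary, lam > 0), the quantities below are the
   coordinate expressions of gamma^f_D and qCov^f_D in the eigenbasis of D:
   A' := U^* A U. *)
Definition qFisher (n : nat) (f : R -> R) (U : 'M[C]_n) (lam : 'I_n -> R)
    (A B : 'M[C]_n) : C :=
  let A' := mxstar U *m A *m U in
  let B' := mxstar U *m B *m U in
  \sum_(i < n) \sum_(j < n)
     toC (mean f (lam i) (lam j))^-1 * Num.conj (A' i j) * B' i j.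

Definition qCov (n : nat) (f : R -> R) (U : 'M[C]_n) (lam : 'I_n -> R)
    (A B : 'M[C]_n) : C :=
  let A' := mxstar U *m A *m U in
  let B' := mxstar U *m B *m U in
  \sum_(i < n) \sum_(j < n)
     toC (mean f (lam i) (lam j)) * Num.conj (A' i j) * B' i j
  - (\sum_(i < n) toC (lam i) * Num.conj (A' i i))
    * (\sum_(i < n) toC (lam i) * B' i i).

Definition commutator (n : nat) (D A : 'M[C]_n) : 'M[C]_n := D *m A - A *m D.

Definition lin_dependent (n m : nat) (B : 'I_m -> 'M[C]_n) : Prop :=
  exists k : 'I_m -> C, (exists i, k i != 0) /\ \sum_(i < m) k i *: B i = 0.

End Defs.

(* Main.v *)
Require Import Defs.
From HB Require Import structures.
From mathcomp Require Import all_boot all_order all_algebra.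
From mathcomp Require Import reals.
From mathcomp Require Import complex.
From mathcomp Require Import ring lra.
Set Implicit Arguments. Unset Strict Implicit. Unset Printing Implicit Defensive.
Import Order.TTheory GRing.Theory Num.Theory.
Local Open Scope ring_scope.
From mathcomp Require Import perm.
Section Gram.
Variable C : numClosedFieldType.
Variables (m : nat) (S : finType) (Y : 'I_m -> S -> C).

Definition gram (w : S -> C) : 'M[C]_m :=
  \matrix_(a, b) \sum_s w s * Num.conj (Y a s) * Y b s.
Definition Zm (phi : {ffun 'I_m -> S}) : 'M[C]_m := \matrix_(a, b) Y b (phi a).

Lemma det_gram1 w : \det (gram w) =
  \sum_(phi : {ffun 'I_m -> S})
     (\prod_a (w (phi a) * Num.conj (Y a (phi a)))) * \det (Zm phi).
Proof.
rewrite /determinant.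
under eq_bigr => s _.
  rewrite (eq_bigr (fun a => \sum_t w t * Num.conj (Y a t) * Y (s a) t));
    last by move=> a _; rewrite mxE.
  rewrite bigA_distr_bigA mulr_sumr /=.
  over.
rewrite exchange_big /=; apply: eq_bigr => phi _.
rewrite mulr_sumr /=; apply: eq_bigr => s _.
rewrite big_split /= mulrCA; congr (_ * (_ * _)).
by apply: eq_bigr => a _; rewrite mxE.
Qed.

Lemma Zm_perm (phi : {ffun 'I_m -> S}) (t : 'S_m) :
  \det (Zm [ffun a => phi (t a)]) = (-1) ^+ t * \det (Zm phi).
Proof.
have -> : Zm [ffun a => phi (t a)] = row_perm t (Zm phi).
  by apply/matrixP => a b; rewrite !mxE ffunE.
by rewrite row_permE det_mulmx det_perm.
Qed.

Lemma det_gram w : (m`!)%:R * \det (gram w) =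
  \sum_(phi : {ffun 'I_m -> S})
     (\prod_a w (phi a)) * (\det (Zm phi) * Num.conj (\det (Zm phi))).
Proof.
rewrite -card_Sn mulr_natl -sumr_const.
transitivity (\sum_(t : 'S_m) \sum_(phi : {ffun 'I_m -> S})
   (\prod_a (w (phi (t a)) * Num.conj (Y a (phi (t a))))) *
       ((-1) ^+ t * \det (Zm phi))).
  apply: eq_bigr => t _; rewrite det_gram1.
  have hinj : injective (fun phi : {ffun 'I_m -> S} => [ffun a => phi (t a)]).
    move=> p q /ffunP H; apply/ffunP => x.
    by have := H (t^-1 x)%g; rewrite !ffunE permKV.
  rewrite (reindex_inj hinj) /=; apply: eq_bigr => phi _.
  rewrite Zm_perm; congr (_ * _).
  by apply: eq_bigr => a _; rewrite ffunE.
rewrite exchange_big /=; apply: eq_bigr => phi _.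
transitivity (\det (Zm phi) * \sum_(t : 'S_m) ((-1) ^+ t *
   \prod_a (w (phi (t a)) * Num.conj (Y a (phi (t a)))))).
  by rewrite mulr_sumr; apply: eq_bigr => t _; rewrite [LHS]mulrC [_ ^+ _ * _]mulrC -mulrA.
rewrite mulrCA; congr (_ * _).
have Hw (t : 'S_m) : \prod_a w (phi (t a)) = \prod_a w (phi a).
  by rewrite [RHS](reindex_inj (@perm_inj _ t)).
rewrite (eq_bigr (fun t : 'S_m => \prod_a w (phi a) * ((-1) ^+ t *
   \prod_a Num.conj (Y a (phi (t a)))))); last first.
  by move=> t _; rewrite big_split /= Hw mulrCA.
rewrite -mulr_sumr /=; congr (_ * _).
rewrite -det_tr /determinant rmorph_sum /=; apply: eq_bigr => t _.
rewrite rmorphM rmorph_prod rmorph_sign /=; congr (_ * _).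
by apply: eq_bigr => a _; rewrite !mxE.
Qed.


Definition gdep := exists k : 'I_m -> C,
  (exists i, k i != 0) /\ forall s, \sum_a k a * Y a s = 0.

Lemma dep_detZ : gdep -> forall phi, \det (Zm phi) = 0.
Proof.
move=> [k [[i ki] hk]] phi; rewrite -det_tr; apply/eqP/det0P.
exists (\row_a k a); first by apply/rV0Pn; exists i; rewrite mxE.
apply/rowP => b; rewrite !mxE -[RHS](hk (phi b)); apply: eq_bigr => a _.
by rewrite !mxE.
Qed.

Lemma ndep_detZ : ~ gdep -> exists phi, \det (Zm phi) != 0.
Proof.
move=> nd; pose M : 'M[C]_(m, #|S|) := \matrix_(a, t) Y a (enum_val t).
have rf : row_free M.
  rewrite -kermx_eq0; apply/negPn/negP => /rowV0Pn [v /sub_kermxP vM v0].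
  apply: nd; exists (fun a => v 0 a); split; first exact/rV0Pn.
  move=> s; have := congr1 (fun X : 'rV[C]_#|S| => X 0 (enum_rank s)) vM.
  rewrite !mxE => H; rewrite -[RHS]H; apply: eq_bigr => a _; by rewrite /M mxE enum_rankK.
have rfT : row_full M^T by rewrite /row_full mxrank_tr.
exists [ffun a => enum_val (fullrankfun rfT a)].
have -> : Zm [ffun a => enum_val (fullrankfun rfT a)] = rowsub (fullrankfun rfT) M^T.
  by apply/matrixP => a b; rewrite !mxE ffunE.
by rewrite -unitfE -unitmxE fullrowsub_unit.
Qed.

Lemma gram_dep w : gdep -> \det (gram w) = 0.
Proof.
move=> d; have := det_gram w.
rewrite big1 => [/eqP|phi _]; last by rewrite dep_detZ // mul0r mulr0.
by rewrite mulf_eq0 pnatr_eq0 (negbTE (lt0n_neq0 (fact_gt0 m))) /= => /eqP.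
Qed.

Lemma gram_le w1 w2 : (forall s, 0 <= w2 s <= w1 s) ->
  \det (gram w2) <= \det (gram w1).
Proof.
move=> hw; have fp : 0 < (m`!)%:R :> C by rewrite ltr0n fact_gt0.
rewrite -(ler_pM2l fp) !det_gram; apply: ler_sum => phi _.
apply: ler_wpM2r; first exact: mul_conjC_ge0.
by apply: ler_prod => a _; apply: hw.
Qed.

Lemma gram_lt w1 w2 : (0 < m)%N -> (forall s, 0 <= w2 s < w1 s) -> ~ gdep ->
  \det (gram w2) < \det (gram w1).
Proof.
move=> m0 hw nd; have fp : 0 < (m`!)%:R :> C by rewrite ltr0n fact_gt0.
have [phi0 hphi0] := ndep_detZ nd.
rewrite -(ltr_pM2l fp) !det_gram (bigD1 phi0) //= [X in _ < X](bigD1 phi0) //=.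
apply: ltr_leD.
  rewrite ltr_pM2r ?mul_conjC_gt0 //.
  apply: ltr_prod => [|a _]; last exact: hw.
  by apply/hasP; exists (Ordinal m0); rewrite ?mem_index_enum.
apply: ler_sum => phi _.
apply: ler_wpM2r; first exact: mul_conjC_ge0.
apply: ler_prod => a _; have /andP[h1 h2] := hw (phi a).
by rewrite h1 ltW.
Qed.

End Gram.
Section Spec.
Variable R : realType.
Local Notation C := (R[i]).

Lemma toCE (x : R) : toC x = (x%:C)%C. Proof. by []. Qed.

Lemma toC_conj (x : R) : Num.conj (toC x) = toC x.
Proof.
apply: conj_Creal; rewrite realE /toC.
have [h|h] := lerP 0 x.
  by rewrite (_ : Complex x 0 = (x%:C)%C) // lecR h.
by apply/orP; right; rewrite (_ : Complex x 0 = (x%:C)%C) // -[X in _ <= X](rmorph0 (real_complex R)) lecR (ltW h).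
Qed.

Lemma key1 (r s : R) (x : 'cV[C]_1) :
  (mxstar x *m (udiag 1%:M (fun _ : 'I_1 => s) - udiag 1%:M (fun _ => r)) *m x) 0 0
  = toC (s - r) * (x 0 0 * Num.conj (x 0 0)).
Proof.
rewrite /udiag /mxstar map_mx1 trmx1 mul1mx !mulmx1 !mxE !big_ord1 !mxE /=.
rewrite big_ord_recl big_ord0 !mxE /= [X in _ - X]big_ord_recl big_ord0 !mxE /=; rewrite !mulr1n mul1r !addr0 !toCE rmorphB /=.
change (x ord0 0) with (x 0 0); by rewrite [_ * (_ - _)]mulrC -mulrA [x 0 0 * _]mulrC.
Qed.


Lemma om_mono (f : R -> R) : operator_monotone f ->
  forall a b, 0 < a -> a <= b -> f a <= f b.
Proof.
move=> om a b a0 ab.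
have U1 : unitary (1%:M : 'M[C]_1) by rewrite /unitary /mxstar map_mx1 trmx1 mul1mx.
have H : loewner_le (udiag 1%:M (fun _ : 'I_1 => a)) (udiag 1%:M (fun _ => b)).
  by move=> x; rewrite key1 mulr_ge0 ?mul_conjC_ge0 // toCE ler0c subr_ge0.
have := om 1%N 1%:M 1%:M (fun _ => a) (fun _ => b) U1 U1 (fun _ => a0)
  (fun _ => lt_le_trans a0 ab) H (const_mx 1).
by rewrite key1 !mxE rmorph1 !mulr1 toCE ler0c subr_ge0.
Qed.


Lemma sym_inv (f : R -> R) : standard f -> forall x, 0 < x -> f x^-1 = f x / x.
Proof.
case=> _ _ _ fs x x0; rewrite [in RHS](fs x x0) mulrC mulrA mulVf ?mul1r //.
by rewrite gt_eqF.
Qed.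

Lemma dbl_le (f : R -> R) : standard f -> forall x, 0 < x -> f (2 * x) <= 2 * f x.
Proof.
move=> sf x x0; have sf' := sf; case: sf' => fp om _ fs.
have y0 : 0 < 2 * x by rewrite mulr_gt0.
rewrite (fs _ y0) (_ : 2 * f x = 2 * x * (f x / x)); last first.
  by rewrite -mulrA [x * _]mulrC -mulrA mulVf ?mulr1 // gt_eqF.
rewrite ler_pM2l // -sym_inv //; apply: om_mono => //; first by rewrite invr_gt0.
by rewrite lef_pV2 ?posrE // ler_peMl // ?(ltW x0) // ler1n.
Qed.

Lemma gt1_case (f g : R -> R) (c : R) : standard f -> standard g -> 0 < c ->
  (forall x : R, 0 < x -> g x >= c * (x - 1) ^+ 2 / f x) ->
  forall x, 1 < x -> c * (x - 1) ^+ 2 < g x * f x.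
Proof.
move=> sf sg c0 H x x1.
have x0 : 0 < x by apply: lt_trans x1.
have y0 : 0 < 2 * x by rewrite mulr_gt0.
have fp := sf; case: fp => fp _ _ _; have gp := sg; case: gp => gp _ _ _.
have hf := dbl_le sf x0; have hg := dbl_le sg x0.
have := H _ y0; rewrite ler_pdivrMr ?fp // => hy.
have hy' : c * (2 * x - 1) ^+ 2 <= (2 * g x) * (2 * f x).
  apply: (le_trans hy); apply: ler_pM => //; try exact: ltW (gp _ y0).
  exact: ltW (fp _ y0).
have := fp _ x0; have := gp _ x0; nra.
Qed.


Lemma strict_ineq (f g : R -> R) (c : R) : standard f -> standard g -> 0 < c ->
  (forall x : R, 0 < x -> g x >= c * (x - 1) ^+ 2 / f x) ->
  forall x, 0 < x -> c * (x - 1) ^+ 2 / f x < g x.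
Proof.
move=> sf sg c0 H x x0.
have fp := sf; case: fp => fp _ f1 _; have gp := sg; case: gp => gp _ g1 _.
rewrite ltr_pdivrMr ?fp //.
case: (ltgtP x 1) => [xl1|xg1|->]; last by rewrite subrr expr0n /= mulr0 g1 f1 mulr1 ltr01.
- have z1 : 1 < x^-1 by rewrite invf_gt1.
  have := gt1_case sf sg c0 H z1.
  rewrite (sym_inv sf x0) (sym_inv sg x0).
  have xz : x * x^-1 = 1 by rewrite mulfV // gt_eqF.
  set z := x^-1 in z1 xz *; clearbody z.
  have := fp _ x0; have := gp _ x0.
  move: (g x) (f x) => G F hG hF.
  move=> h.
  have h2 : c * (z - 1) ^+ 2 * (x * x) < G * z * (F * z) * (x * x).
    by rewrite ltr_pM2r // mulr_gt0.
  have e1 : c * (z - 1) ^+ 2 * (x * x) = c * (x - 1) ^+ 2.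
    rewrite -mulrA (_ : (z - 1) ^+ 2 * (x * x) = ((x * z) - x) ^+ 2); last by ring.
    rewrite xz; congr (_ * _); by rewrite -sqrrN opprB.
  have e2 : G * z * (F * z) * (x * x) = G * F.
    rewrite (_ : G * z * (F * z) * (x * x) = G * F * ((x * z) * (x * z))); last by ring.
    by rewrite xz !mulr1.
  by rewrite -e1 -e2.
- exact: gt1_case sf sg c0 H x xg1.
Qed.


Lemma weight_ineq (f g : R -> R) (c : R) : standard f -> standard g -> 0 < c ->
  (forall x : R, 0 < x -> g x >= c * (x - 1) ^+ 2 / f x) ->
  forall a b, 0 < a -> 0 < b ->
  0 <= c * (mean f a b)^-1 * (a - b) ^+ 2 < mean g a b.
Proof.
move=> sf sg c0 H a b a0 b0.
have fp := sf; case: fp => fp _ _ _.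
have x0 : 0 < a / b by rewrite divr_gt0.
have mf0 : 0 < mean f a b by rewrite /mean mulr_gt0 ?fp.
apply/andP; split; first by rewrite mulr_ge0 ?sqr_ge0 // mulr_ge0 ?invr_ge0 ?ltW.
have := strict_ineq sf sg c0 H x0.
rewrite /mean; set x := a / b => hx.
have ea : a = x * b by rewrite /x divfK // gt_eqF.
rewrite ea (_ : x * b - b = (x - 1) * b); last by rewrite mulrBl mul1r.
have fx0 : 0 < f x by apply: fp.
rewrite (_ : c * (b * f x)^-1 * ((x - 1) * b) ^+ 2 = b * (c * (x - 1) ^+ 2 / f x)).
  by rewrite ltr_pM2l.
by field; rewrite ?gt_eqF.
Qed.

End Spec.

Section MX.
Variable R : realType.
Local Notation C := (R[i]).
Variables (n : nat) (U D : 'M[C]_n) (lam : 'I_n -> R).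
Hypothesis hU : unitary U.
Hypothesis HD : D = udiag U lam.
Local Notation Lam := (diag_mx (\row_i toC (lam i)) : 'M[C]_n).

Lemma hU' : U *m mxstar U = 1%:M.
Proof. exact: mulmx1C hU. Qed.

Lemma UDU : mxstar U *m D *m U = Lam.
Proof.
by rewrite HD /udiag !mulmxA hU mul1mx -mulmxA hU mulmx1.
Qed.

Lemma tr_diag_mul (M : 'M[C]_n) : \tr (Lam *m M) = \sum_i toC (lam i) * M i i.
Proof. by rewrite /mxtrace; apply: eq_bigr => i _; rewrite mul_diag_mx !mxE. Qed.

Lemma trDM (M : 'M[C]_n) :
  \tr (D *m M) = \sum_i toC (lam i) * (mxstar U *m M *m U) i i.
Proof.
rewrite HD /udiag -!mulmxA mxtrace_mulC -!mulmxA -tr_diag_mul.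
by rewrite !mulmxA.
Qed.

Lemma trD : \tr D = \sum_i toC (lam i).
Proof.
have := trDM 1%:M; rewrite mulmx1 => ->; apply: eq_bigr => i _.
by rewrite mulmx1 hU mxE eqxx mulr1.
Qed.

Lemma comm_conj (M : 'M[C]_n) :
  mxstar U *m commutator D M *m U =
  Lam *m (mxstar U *m M *m U) - (mxstar U *m M *m U) *m Lam.
Proof.
rewrite /commutator mulmxBr mulmxBl -UDU.
congr (_ - _).
  by rewrite !mulmxA -[_ *m D *m U *m mxstar U]mulmxA hU' mulmx1.
by rewrite !mulmxA -[_ *m M *m U *m mxstar U]mulmxA hU' mulmx1.
Qed.

End MX.

Section Alg.
Variable C : numClosedFieldType.

Lemma sum_delta n (F : 'I_n -> C) i : \sum_j (i == j)%:R * F j = F i.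
Proof.
rewrite (bigD1 i) //= eqxx mul1r big1 ?addr0 // => j ji.
by rewrite eq_sym (negbTE ji) mul0r.
Qed.

Lemma qcov_alg n (w : 'I_n -> 'I_n -> C) (lc : 'I_n -> C) (X1 X2 : 'M[C]_n)
    (t1 t2 : C) :
  (forall i, w i i = lc i) -> \sum_i lc i = 1 ->
  Num.conj t1 = \sum_i lc i * Num.conj (X1 i i) -> t2 = \sum_i lc i * X2 i i ->
  \sum_i \sum_j w i j * Num.conj (X1 i j - t1 * (i == j)%:R)
       * (X2 i j - t2 * (i == j)%:R)
  = \sum_i \sum_j w i j * Num.conj (X1 i j) * X2 i j - Num.conj t1 * t2.
Proof.
move=> hw hl h1 h2.
pose b i j := w i j * (Num.conj (X1 i j) * t2 + Num.conj t1 * X2 i j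
   - Num.conj t1 * t2).
have E i j : w i j * Num.conj (X1 i j - t1 * (i == j)%:R)
       * (X2 i j - t2 * (i == j)%:R)
   = w i j * Num.conj (X1 i j) * X2 i j - (i == j)%:R * b i j.
  rewrite /b rmorphB rmorphM rmorph_nat /=.
  by case: (i == j) => /=; ring.
rewrite (eq_bigr (fun i => \sum_j w i j * Num.conj (X1 i j) * X2 i j - b i i));
  last first.
  by move=> i _; rewrite (eq_bigr _ (fun j _ => E i j)) sumrB sum_delta.
rewrite sumrB; congr (_ - _).
rewrite /b.
transitivity (\sum_i lc i * (Num.conj (X1 i i) * t2) +
   \sum_i lc i * (Num.conj t1 * X2 i i) - (\sum_i lc i) * (Num.conj t1 * t2)).
  rewrite -big_split /= mulr_suml -sumrB; apply: eq_bigr => i _.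
  by rewrite hw; ring.
rewrite hl mul1r.
rewrite (eq_bigr (fun i => lc i * Num.conj (X1 i i) * t2)); last first.
  by move=> i _; rewrite mulrA.
rewrite -mulr_suml -h1.
rewrite (eq_bigr (fun i => Num.conj t1 * (lc i * X2 i i))); last first.
  by move=> i _; rewrite mulrCA.
rewrite -mulr_sumr -h2.
by rewrite addrK.
Qed.

End Alg.

Lemma comm_entry (R : realType) n (lam : 'I_n -> R) (M : 'M[R[i]]_n) i j :
  (diag_mx (\row_k toC (lam k)) *m M - M *m diag_mx (\row_k toC (lam k))) i j
  = (toC (lam i) - toC (lam j)) * M i j.
Proof. by rewrite mul_diag_mx mul_mx_diag !mxE mulrBl [M i j * _]mulrC. Qed.

Lemma entry_shift (R : realType) n (M : 'M[R[i]]_n) (t : R[i]) i j :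
  (M - t *: 1%:M) i j = M i j - t * (i == j)%:R.
Proof. by rewrite !mxE. Qed.

Lemma fisher_eq (R : realType) n (U D : 'M[R[i]]_n) (lam : 'I_n -> R) (f : R -> R)
    (c : R) (M1 M2 : 'M[R[i]]_n) :
  unitary U -> D = udiag U lam ->
  toC c * qFisher f U lam (commutator D M1) (commutator D M2) =
  \sum_i \sum_j toC (c * (mean f (lam i) (lam j))^-1 * (lam i - lam j) ^+ 2)
     * Num.conj ((mxstar U *m M1 *m U) i j) * (mxstar U *m M2 *m U) i j.
Proof.
move=> hU HD; rewrite /qFisher /= (comm_conj hU HD M1) (comm_conj hU HD M2).
move: (mxstar U *m M1 *m U) (mxstar U *m M2 *m U) => X1 X2.
rewrite mulr_sumr; apply: eq_bigr => i _; rewrite mulr_sumr; apply: eq_bigr => j _.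
rewrite !comm_entry rmorphM rmorphB /= !toC_conj.
rewrite !toCE !rmorphM /= rmorphB /=.
ring.
Qed.

From Stdlib Require Import Classical.

Unset Implicit Arguments.

Theorem theorem3 (R : realType) (n : nat) (D U : 'M[R[i]]_n) (lam : 'I_n -> R)
    (f g : R -> R) (c : R) (m : nat) (A : 'I_m -> 'M[R[i]]_n) :
  unitary U -> (forall i, 0 < lam i) -> D = udiag U lam -> \tr D = 1 ->
  standard f -> standard g -> 0 < c ->
  (forall x : R, 0 < x -> g x >= c * (x - 1) ^+ 2 / f x) ->
  (0 < m)%N ->
  (forall k, selfadjoint (A k)) ->
  let L := \det (\matrix_(i < m, j < m) qCov g U lam (A i) (A j)) in
  let Rt := \det (\matrix_(i < m, j < m)
               (toC c * qFisher f U lam (commutator D (A i)) (commutator D (A j)))) in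
  let B := fun k => A k - (\tr (D *m A k)) *: (1%:M : 'M[R[i]]_n) in
  [/\ L >= Rt,
      L = Rt <-> lin_dependent B &
      lin_dependent B -> L = 0 /\ Rt = 0].
Proof.
move=> hU hlam HD trD1 sf sg c0 H m0 _ L Rt B.
pose X k := mxstar U *m A k *m U.
pose t k := \tr (D *m A k).
pose Y k := mxstar U *m B k *m U.
have HY k : Y k = X k - t k *: 1%:M.
  by rewrite /Y /B mulmxBr mulmxBl -scalemxAr mulmx1 -scalemxAl hU.
have HYe k i j : Y k i j = X k i j - t k * (i == j)%:R.
  by rewrite HY; move: (X k) (t k) => M s; rewrite !mxE.
pose Yf k (s : 'I_n * 'I_n) := Y k s.1 s.2.
pose w1 (s : 'I_n * 'I_n) := toC (mean g (lam s.1) (lam s.2)).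
pose w2 (s : 'I_n * 'I_n) :=
  toC (c * (mean f (lam s.1) (lam s.2))^-1 * (lam s.1 - lam s.2) ^+ 2).
have hl : \sum_i toC (lam i) = 1 by rewrite -trD1 (trD hU HD).
have ht k : t k = \sum_i toC (lam i) * X k i i by rewrite /t (trDM HD).
have hct k : Num.conj (t k) = \sum_i toC (lam i) * Num.conj (X k i i).
  rewrite ht rmorph_sum; apply: eq_bigr => i _.
  by rewrite rmorphM /= toC_conj.
have EL : L = \det (gram Yf w1).
  rewrite /L; congr (\det _); apply/matrixP => k l; rewrite !mxE /qCov /=.
  rewrite -(pair_bigA _ (fun i j => w1 (i, j) * Num.conj (Yf k (i, j)) * Yf l (i, j))) /=.
  rewrite /Yf /=.
  have E1 i : \sum_j w1 (i, j) * Num.conj (Y k i j) * Y l i j =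
     \sum_j w1 (i, j) * Num.conj (X k i j - t k * (i == j)%:R)
       * (X l i j - t l * (i == j)%:R).
    by apply: eq_bigr => j _; congr (_ * Num.conj _ * _); apply: HYe.
  rewrite [RHS](eq_bigr _ (fun i _ => E1 i)).
  rewrite (qcov_alg (w := fun i j => w1 (i, j)) (lc := fun i => toC (lam i))).
  - by rewrite -/(X k) -/(X l) -hct -ht.
  - move=> i; rewrite /w1 /mean /= divff ?gt_eqF //.
    by case: sg => _ _ -> _; rewrite mulr1.
  - exact: hl.
  - exact: hct.
  - exact: ht.
have ER : Rt = \det (gram Yf w2).
  rewrite /Rt; congr (\det _); apply/matrixP => k l; rewrite !mxE.
  rewrite (fisher_eq _ _ _ _ hU HD).
  rewrite -(pair_bigA _ (fun i j => w2 (i, j) * Num.conj (Yf k (i, j)) * Yf l (i, j))) /=.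
  apply: eq_bigr => i _; apply: eq_bigr => j _.
  transitivity (w2 (i, j) * Num.conj (X k i j - t k * (i == j)%:R)
       * (X l i j - t l * (i == j)%:R)); last first.
    by congr (_ * Num.conj _ * _); symmetry; apply: HYe.
  rewrite /w2 /=; case: (eqVneq i j) => [->|ne].
    by rewrite !subrr expr0n /= !mulr0 toCE rmorph0 !mul0r.
  by rewrite !mulr0 !subr0.
have hw s : 0 <= w2 s < w1 s.
  rewrite /w1 /w2 !toCE ler0c ltcR; apply: weight_ineq => //.
have scE (x : R[i]) (M : 'M[R[i]]_n) i j : (x *: M) i j = x * M i j.
  by rewrite mxE.
have HB a : B a = U *m Y a *m mxstar U.
  by rewrite /Y !mulmxA (hU' hU) mul1mx -mulmxA (hU' hU) mulmx1.
have Edep : lin_dependent B <-> gdep Yf.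
  split => [[k [[i ki] hs]] | [k [[i ki] hs]]]; exists k; (split; first by exists i).
    move=> s; have := congr1 (fun M : 'M[R[i]]_n => (mxstar U *m M *m U) s.1 s.2) hs.
    rewrite /= mulmx0 mul0mx mulmx_sumr mulmx_suml summxE [X in _ = X -> _]mxE => HH.
    rewrite -[RHS]HH; apply: eq_bigr => a _.
    by rewrite -scalemxAr -scalemxAl scE.
  have Z : \sum_a k a *: Y a = 0.
    apply/matrixP => i0 j0; rewrite summxE mxE -[RHS](hs (i0, j0)).
    by apply: eq_bigr => a _; rewrite scE.
  transitivity (\sum_a U *m (k a *: Y a) *m mxstar U).
    apply: eq_bigr => a _.
    by rewrite -scalemxAr -scalemxAl -HB.
  by rewrite -mulmx_suml -mulmx_sumr Z mulmx0 mul0mx.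
rewrite EL ER; split.
- by apply: gram_le => s; have /andP[-> /ltW ->] := hw s.
- split => [E|d]; last first.
    by have d' := (proj1 Edep) d; rewrite (gram_dep _ d') (gram_dep _ d').
  case: (classic (gdep Yf)) => [/(proj2 Edep) // | nd].
  by have := gram_lt m0 hw nd; rewrite E ltxx.
- move=> d; have d' := (proj1 Edep) d.
  by rewrite (gram_dep _ d') (gram_dep _ d').
Qed.
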